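(* Let $\phi\in\,]0,\pi[$, $M\in\mathbb{R}$, $N>0$, and let $\Sigma$ be the Keplerian branch around ${\rm O}$ in the plane ${\rm O}xy$ with equation $r=My+N$. The affine map $(x_1,y_1)\mapsto(x_3,y_3)$ defined by $x_1=x_3-M\frac{\cos\phi}{\sin\phi}y_3-N\cos\phi$, $y_1=\frac{1}{\sin\phi}y_3$ sends any horizontal chord ${\rm A}{\rm B}$ of $\Sigma$ (two distinct points of $\Sigma$ with the same ordinate) onto a horizontal chord ${\rm A}'{\rm B}'$ of the image branch with $\|{\rm A}'{\rm B}'\|=\|{\rm A}{\rm B}\|$ and $\|{\rm O}{\rm A}'\|+\|{\rm O}{\rm B}'\|=\|{\rm O}{\rm A}\|+\|{\rm O}{\rm B}\|$.
   Context: In the Euclidean plane ${\rm O}xy$, $r=\sqrt{x^2+y^2}$. A Keplerian branch around ${\rm O}$ is the image of a solution of Newton's system $\ddot q=-q/\|q\|^3$ (extended through collisions by bouncing back along the same ray). For $\gamma>0$, the set of points satisfying $r=\alpha x+\beta y+\gamma$ is a Keplerian branch around ${\rm O}$; the image of $\Sigma$ by the given map is the Keplerian branch $r=x\cos\phi+yM\sin\phi+N\sin^2\phi$. *)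

(* Defs.v *)
From Stdlib Require Import Reals.
Open Scope R_scope.

Definition rad (p : R * R) : R := sqrt (fst p ^ 2 + snd p ^ 2).

Definition dist2 (p q : R * R) : R :=
  sqrt ((fst p - fst q) ^ 2 + (snd p - snd q) ^ 2).

Definition kep_branch (alpha beta gamma : R) (p : R * R) : Prop :=
  rad p = alpha * fst p + beta * snd p + gamma.

(* The affine map (x1,y1) |-> (x3,y3) defined implicitly by
   x1 = x3 - M (cos phi / sin phi) y3 - N cos phi,  y1 = y3 / sin phi,
   i.e. y3 = sin phi * y1 and x3 = x1 + M cos phi y1 + N cos phi. *)
Definition kmap (phi M N : R) (p : R * R) : R * R :=
  (fst p + M * cos phi * snd p + N * cos phi, sin phi * snd p).

(* Main.v *)
Require Import Defs.
From Stdlib Require Import Reals Lra Psatz.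
Open Scope R_scope.

Lemma rad_ge (x y : R) : Rabs x <= rad (x, y).
Proof.
  unfold rad; simpl. rewrite <- sqrt_Rsqr_abs. apply sqrt_le_1_alt.
  unfold Rsqr; nra.
Qed.

Lemma img_rad (phi M N x y : R) :
  kep_branch 0 M N (x, y) ->
  rad (kmap phi M N (x, y)) = cos phi * x + rad (x, y).
Proof.
  unfold kep_branch; simpl; intros H.
  set (r := rad (x, y)) in *.
  assert (Hr2 : r ^ 2 = x ^ 2 + y ^ 2).
  { unfold r, rad; cbn [fst snd]. rewrite pow2_sqrt; [ring|nra]. }
  assert (Hab := rad_ge x y). fold r in Hab.
  assert (Hc := COS_bound phi).
  assert (Hs : sin phi ^ 2 + cos phi ^ 2 = 1).
  { rewrite <- (sin2_cos2 phi); unfold Rsqr; ring. }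
  assert (Hpos : 0 <= cos phi * x + r).
  { destruct (Rle_or_lt 0 x).
    - rewrite Rabs_right in Hab by lra. nra.
    - rewrite Rabs_left in Hab by lra. nra. }
  unfold rad, kmap; simpl.
  rewrite <- (sqrt_pow2 _ Hpos). f_equal.
  replace (M * y + N) with (r - 0 * x) in * by lra.
  assert (E: M * y + N = r) by lra.
  replace (x + M * cos phi * y + N * cos phi) with (x + cos phi * r) by (rewrite <- E; ring).
  nra.
Qed.

Theorem lemma8 (phi M N : R) (A B : R * R) :
  0 < phi < PI -> 0 < N ->
  kep_branch 0 M N A -> kep_branch 0 M N B ->
  A <> B -> snd A = snd B ->
  (* the defining relations of the map, as in the paper *)
  (forall p : R * R,
     fst p = fst (kmap phi M N p) - M * (cos phi / sin phi) * snd (kmap phi M N p)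
             - N * cos phi /\
     snd p = / sin phi * snd (kmap phi M N p)) /\
  (* A'B' is a horizontal chord of the image branch *)
  kep_branch (cos phi) (M * sin phi) (N * sin phi ^ 2) (kmap phi M N A) /\
  kep_branch (cos phi) (M * sin phi) (N * sin phi ^ 2) (kmap phi M N B) /\
  kmap phi M N A <> kmap phi M N B /\
  snd (kmap phi M N A) = snd (kmap phi M N B) /\
  (* length and sum of focal distances preserved *)
  dist2 (kmap phi M N A) (kmap phi M N B) = dist2 A B /\
  rad (kmap phi M N A) + rad (kmap phi M N B) = rad A + rad B.
Proof.
  intros Hphi HN HA HB Hne Hy.
  assert (Hsin : 0 < sin phi) by (apply sin_gt_0; lra).
  assert (Hs : sin phi ^ 2 + cos phi ^ 2 = 1).
  { rewrite <- (sin2_cos2 phi); unfold Rsqr; ring. }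
  destruct A as [a1 a2]; destruct B as [b1 b2]; simpl in Hy; subst b2.
  pose proof (img_rad phi M N a1 a2 HA) as RA.
  pose proof (img_rad phi M N b1 a2 HB) as RB.
  unfold kep_branch in HA, HB; simpl in HA, HB.
  assert (Hsq : a1 ^ 2 = b1 ^ 2).
  { assert (h1 : rad (a1, a2) ^ 2 = a1 ^ 2 + a2 ^ 2).
    { unfold rad; cbn [fst snd]. rewrite pow2_sqrt; [ring|nra]. }
    assert (h2 : rad (b1, a2) ^ 2 = b1 ^ 2 + a2 ^ 2).
    { unfold rad; cbn [fst snd]. rewrite pow2_sqrt; [ring|nra]. }
    rewrite HA in h1; rewrite HB in h2; lra. }
  assert (Hb : b1 = - a1).
  { assert (a1 <> b1) by (intro; subst; apply Hne; reflexivity).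
    assert ((a1 - b1) * (a1 + b1) = 0) by nra.
    destruct (Rmult_integral _ _ H0); lra. }
  subst b1.
  split; [| split; [| split; [| split; [| split; [| split]]]]].
  - intros [x y]; unfold kmap; simpl; split; field; lra.
  - unfold kep_branch. rewrite RA. unfold kmap; cbn [fst snd]. rewrite HA. assert (Hc2 : cos phi * cos phi = 1 - sin phi ^ 2) by lra. transitivity (cos phi * a1 + M * a2 * (cos phi * cos phi + sin phi ^2) + N * (cos phi * cos phi + sin phi ^ 2)); [rewrite Hc2; ring | ring].
  - unfold kep_branch. rewrite RB. unfold kmap; cbn [fst snd]. rewrite HB. assert (Hc2 : cos phi * cos phi = 1 - sin phi ^ 2) by lra. transitivity (cos phi * - a1 + M * a2 * (cos phi * cos phi + sin phi ^2) + N * (cos phi * cos phi + sin phi ^ 2)); [rewrite Hc2; ring | ring].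
  - unfold kmap; simpl; intro E. injection E; intros.
    apply Hne. f_equal. lra.
  - reflexivity.
  - unfold dist2, kmap; simpl. f_equal. ring.
  - rewrite RA, RB, HA, HB. ring.
Qed.
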